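(* Assume $n\ge 3$. Let $|\Psi^{\mathrm h}_0\rangle$ and $|\Psi^{\mathrm c}_0\rangle$ be initial states with $p^{\mathrm h}_0(0)>0$, $p^{\mathrm c}_0(0)>0$, and $D_I^{\mathrm h}(0)>D_I^{\mathrm c}(0)$. Define $r^{\mathrm h}=\frac{p^{\mathrm h}_1(0)}{p^{\mathrm h}_0(0)}$, $r^{\mathrm c}=\frac{p^{\mathrm c}_1(0)}{p^{\mathrm c}_0(0)}$, $s^{\mathrm h}=\frac{1-p^{\mathrm h}_0(0)}{p^{\mathrm h}_0(0)}$. If $r^{\mathrm h}<r^{\mathrm c}$ and $\epsilon>0$ satisfies $$\epsilon<\left(1+\frac{1}{r^{\mathrm c}}\left(\frac{s^{\mathrm h}-r^{\mathrm h}}{r^{\mathrm c}-r^{\mathrm h}}\right)^{\frac{E_1}{E_2-E_1}}\right)^{-1},$$ then the Mpemba effect with respect to $D_I$ occurs before the threshold $\epsilon$, i.e. there exists $\tau^\star>0$ such that $D_I^{\mathrm h}(\tau^\star)=D_I^{\mathrm c}(\tau^\star)>\epsilon$ and $D_I^{\mathrm h}(\tau)<D_I^{\mathrm c}(\tau)$ for all $\tau>\tau^\star$.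
   Context: Let $H$ be a Hamiltonian on an $n$-dimensional Hilbert space with nondegenerate eigenvalues $0=E_0<E_1<\dots<E_{n-1}$ and orthonormal eigenvectors $|E_0\rangle,\dots,|E_{n-1}\rangle$. For a pure initial state $|\Psi_0\rangle$ and real $\tau$, QITE is $|\Psi(\tau)\rangle=e^{-H\tau}|\Psi_0\rangle/\sqrt{\langle\Psi_0|e^{-2H\tau}|\Psi_0\rangle}$, with populations $p_i(\tau)=|\langle E_i|\Psi(\tau)\rangle|^2=p_i(0)e^{-2E_i\tau}/\sum_{j}p_j(0)e^{-2E_j\tau}$. The ground-state infidelity is $D_I(\tau)=1-p_0(\tau)$. Superscripts $\mathrm h$ and $\mathrm c$ denote quantities for the QITE trajectories starting from $|\Psi^{\mathrm h}_0\rangle$ and $|\Psi^{\mathrm c}_0\rangle$ respectively. *)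

(* Defs.v *)
From mathcomp Require Import all_boot all_order all_algebra.
From mathcomp Require Import all_classical all_reals all_analysis.
From mathcomp Require Import complex.
Set Implicit Arguments. Unset Strict Implicit. Unset Printing Implicit Defensive.
Import Order.TTheory GRing.Theory Num.Theory.
Local Open Scope ring_scope.

(* A pure state is given by its coordinates c k = <E_k|Psi_0> (k < n) in the
   orthonormal eigenbasis of H; coordinates with k >= n are irrelevant. *)

Definition pop0 (R : realType) (c : nat -> R[i]) (k : nat) : R :=
  (complex.Re (c k)) ^+ 2 + (complex.Im (c k)) ^+ 2.

Definition normalized (R : realType) (n : nat) (c : nat -> R[i]) : Prop :=
  \sum_(0 <= k < n) pop0 c k = 1.

Definition pop (R : realType) (n : nat) (E : nat -> R) (c : nat -> R[i])
  (tau : R) (k : nat) : R :=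
  pop0 c k * expR (- (2 * E k * tau)) /
  \sum_(0 <= j < n) pop0 c j * expR (- (2 * E j * tau)).

Definition DI (R : realType) (n : nat) (E : nat -> R) (c : nat -> R[i])
  (tau : R) : R := 1 - pop n E c tau 0.

(* Main.v *)
Require Import Defs.
From mathcomp Require Import all_boot all_order all_algebra.
From mathcomp Require Import all_classical all_reals all_analysis.
From mathcomp Require Import complex.
From mathcomp Require Import ring lra.
Import Order.TTheory GRing.Theory Num.Theory.
Import numFieldNormedType.Exports.
Local Open Scope classical_set_scope.
Local Open Scope ring_scope.

Definition Qs (R : realType) (n : nat) (E : nat -> R) (c : nat -> R[i]) (t : R) : R :=
  \sum_(1 <= k < n) pop0 c k * expR (- (2 * E k * t)).

Arguments Qs {R}.

Lemma pop0_ge0 {R : realType} (c : nat -> R[i]) k : 0 <= pop0 c k.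
Proof. by rewrite /pop0 addr_ge0 // sqr_ge0. Qed.

Lemma Qs_ge0 {R : realType} (n : nat) (E : nat -> R) (c : nat -> R[i]) t : 0 <= Qs n E c t.
Proof.
by apply: sumr_ge0 => k _; rewrite mulr_ge0 ?pop0_ge0 // expR_ge0.
Qed.

Lemma DI_eq {R : realType} (n : nat) (E : nat -> R) (c : nat -> R[i]) t :
  (0 < n)%N -> E 0%N = 0 -> 0 < pop0 c 0 ->
  DI n E c t = Qs n E c t / (pop0 c 0 + Qs n E c t).
Proof.
move=> n0 E0 p0.
rewrite /DI /pop big_ltn // E0 mulr0 mul0r oppr0 expR0 mulr1 -/(Qs n E c t).
have hQ := Qs_ge0 n E c t.
have hD : pop0 c 0 + Qs n E c t != 0 by rewrite gt_eqF //; lra.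
by field.
Qed.

Lemma cont_term {R : realType} (a b : R) :
  continuous (fun t : R => a * expR (- (2 * b * t))).
Proof.
move=> x.
apply: cvgM; first exact: cvg_cst.
apply: (@continuous_comp _ _ _ (fun t : R => - (2 * b * t)) expR).
  apply: continuousN.
  apply: cvgM; first exact: cvg_cst.
  exact: cvg_id.
exact: continuous_expR.
Qed.

Lemma cont_sum {R : realType} (s : seq nat) (f : nat -> R -> R) :
  (forall k, continuous (f k)) -> continuous (fun t => \sum_(k <- s) f k t).
Proof.
move=> Hf; elim: s => [|k s IH].
  have -> : (fun t : R => \sum_(k <- [::]) f k t) = fun=> 0.
    by apply: funext => t; rewrite big_nil.
  move=> x; exact: cst_continuous.
have -> : (fun t : R => \sum_(j <- k :: s) f j t) =
   (f k + (fun t => \sum_(j <- s) f j t))%R.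
  by apply: funext => t; rewrite big_cons.
move=> x; apply: (@continuousD R R^o R); [exact: Hf | exact: IH].
Qed.

Lemma Qs_cont {R : realType} (n : nat) (E : nat -> R) (c : nat -> R[i]) :
  continuous (Qs n E c).
Proof.
rewrite /Qs; apply: cont_sum => k; exact: cont_term.
Qed.

Lemma Qs_lb {R : realType} (n : nat) (E : nat -> R) (c : nat -> R[i]) t :
  (1 < n)%N -> pop0 c 1 * expR (- (2 * E 1%N * t)) <= Qs n E c t.
Proof.
move=> n1; rewrite /Qs big_ltn //= lerDl.
by apply: sumr_ge0 => k _; rewrite mulr_ge0 ?pop0_ge0 // expR_ge0.
Qed.

Lemma Qs_ub {R : realType} (n : nat) (E : nat -> R) (c : nat -> R[i]) t :
  (2 < n)%N -> (forall j k : nat, (j < k)%N -> (k < n)%N -> E j < E k) ->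
  0 <= t ->
  Qs n E c t <= pop0 c 1 * expR (- (2 * E 1%N * t)) +
     (\sum_(2 <= k < n) pop0 c k) * expR (- (2 * E 2%N * t)).
Proof.
move=> n2 Em t0; rewrite /Qs big_ltn ?(ltn_trans _ n2) // lerD2l mulr_suml.
apply: ler_sum_nat => k /andP[k2 kn].
apply: ler_wpM2l; first exact: pop0_ge0.
rewrite ler_expR lerN2; apply: ler_wpM2r => //; apply: ler_wpM2l => //.
move: k2; rewrite leq_eqVlt => /orP[/eqP <- //|k2].
exact/ltW/Em.
Qed.

Lemma norm_split {R : realType} (n : nat) (c : nat -> R[i]) :
  (1 < n)%N -> normalized n c ->
  1 - pop0 c 0 = pop0 c 1 + \sum_(2 <= k < n) pop0 c k.
Proof.
move=> n1; rewrite /normalized big_ltn ?(ltn_trans _ n1) // big_ltn // => <-.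
by rewrite addrAC subrr add0r.
Qed.

Theorem theorem2 (R : realType) (n : nat) (E : nat -> R)
  (ch cc : nat -> R[i]) (eps : R) :
  (3 <= n)%N ->
  E 0%N = 0 ->
  (forall j k : nat, (j < k)%N -> (k < n)%N -> E j < E k) ->
  normalized n ch -> normalized n cc ->
  0 < pop0 ch 0 -> 0 < pop0 cc 0 ->
  DI n E ch 0 > DI n E cc 0 ->
  let rh := pop0 ch 1 / pop0 ch 0 in
  let rc := pop0 cc 1 / pop0 cc 0 in
  let sh := (1 - pop0 ch 0) / pop0 ch 0 in
  rh < rc ->
  0 < eps ->
  eps < (1 + rc^-1 * powR ((sh - rh) / (rc - rh)) (E 1%N / (E 2%N - E 1%N)))^-1 ->
  exists taus : R, 0 < taus /\
    DI n E ch taus = DI n E cc taus /\ DI n E cc taus > eps /\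
    (forall tau : R, taus < tau -> DI n E ch tau < DI n E cc tau).
Proof.
move=> n3 E0 Em nh nc Ah0 Ac0 DI0 rh rc sh rhc eps0 epsb.
rewrite /rh /rc in rhc; rewrite /rh /rc /sh in epsb.
clear rh rc sh.
have n0 : (0 < n)%N by apply: leq_trans n3.
have n1 : (1 < n)%N by apply: leq_trans n3.
have n2 : (2 < n)%N by [].
have E1 : 0 < E 1%N by rewrite -E0; apply: Em.
have E12 : E 1%N < E 2%N by apply: Em.
set Ah := pop0 ch 0 in Ah0 DI0 rhc epsb *.
set Ac := pop0 cc 0 in Ac0 DI0 rhc epsb *.
set ph1 := pop0 ch 1 in rhc epsb *.
set pc1 := pop0 cc 1 in rhc epsb *.
set P2h := \sum_(2 <= k < n) pop0 ch k.
have P2h0 : 0 <= P2h by apply: sumr_ge0 => k _; exact: pop0_ge0.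
have ph10 : 0 <= ph1 by exact: pop0_ge0.
have Hnh : 1 - Ah = ph1 + P2h by exact: norm_split.
set K := pc1 * Ah - ph1 * Ac.
have K0 : 0 < K.
  by move: rhc; rewrite ltr_pdivrMr // mulrAC ltr_pdivlMr // /K subr_gt0.
have pc10 : 0 < pc1 by rewrite /K in K0; nra.
set Qh := Qs n E ch.
set Qc := Qs n E cc.
set d := fun t => Ac * Qh t - Ah * Qc t.
have dcont : continuous d.
  move=> x; apply: cvgB; apply: cvgM; (try exact: cvg_cst); exact: Qs_cont.
have Qh0 : forall t, 0 <= Qh t by move=> t; exact: Qs_ge0.
have Qc0 : forall t, 0 <= Qc t by move=> t; exact: Qs_ge0.
have sgn : forall t, DI n E ch t - DI n E cc t =
    d t / ((Ah + Qh t) * (Ac + Qc t)).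
  move=> t; rewrite !DI_eq // -/Ah -/Ac -/Qh -/Qc /d.
  have := Qh0 t; have := Qc0 t => q1 q2.
  have h1 : Ah + Qh t != 0 by rewrite gt_eqF //; lra.
  have h2 : Ac + Qc t != 0 by rewrite gt_eqF //; lra.
  by field; rewrite h1 h2.
have Dpos : forall t, 0 < ((Ah + Qh t) * (Ac + Qc t))^-1.
  move=> t; rewrite invr_gt0; have := Qh0 t; have := Qc0 t => q1 q2.
  apply: mulr_gt0; lra.
have d0 : 0 < d 0.
  rewrite -(pmulr_lgt0 _ (Dpos 0)) -sgn subr_gt0; exact: DI0.
set k := 2 * (E 2%N - E 1%N).
have k0 : 0 < k by rewrite /k; lra.
have uvw : forall t, expR (- (2 * E 2%N * t)) =
    expR (- (2 * E 1%N * t)) * expR (- (k * t)).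
  by move=> t; rewrite -expRD /k; congr expR; ring.
have key : forall t, 0 <= t ->
    Ac * Qh t <= Ac * (ph1 * expR (- (2 * E 1%N * t)) +
       P2h * (expR (- (2 * E 1%N * t)) * expR (- (k * t)))) /\
    Ah * (pc1 * expR (- (2 * E 1%N * t))) <= Ah * Qc t.
  move=> t t0; split.
    by apply: ler_wpM2l; [lra| rewrite -uvw; exact: Qs_ub].
  by apply: ler_wpM2l; [lra| exact: Qs_lb].
set T := Ac * P2h / (K * k).
have T0 : 0 <= T by rewrite /T divr_ge0 // ?mulr_ge0 //; lra.
have dneg : forall t, T <= t -> d t < 0.
  move=> t Tt.
  have t0 : 0 <= t by lra.
  have [k1 k2] := key t t0.
  set u := expR (- (2 * E 1%N * t)) in k1 k2 *.
  set v := expR (- (k * t)) in k1 k2 *.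
  have u0 : 0 < u by exact: expR_gt0.
  have v0 : 0 < v by exact: expR_gt0.
  have vk : v * (1 + k * t) <= 1.
    rewrite /v expRN mulrC ler_pdivrMr ?expR_gt0 // mul1r.
    exact: expR_ge1Dx.
  have hT : Ac * P2h <= K * k * t.
    have Kk : 0 < K * k by exact: mulr_gt0.
    have eT : T * (K * k) = Ac * P2h by rewrite /T divfK // lt0r_neq0.
    rewrite -eT [K * k * t]mulrC; by apply: ler_wpM2r => //; exact: ltW.
  have hv : Ac * P2h * v < K.
    have h3 : Ac * P2h < K * (1 + k * t) by nra.
    nra.
  have : d t <= u * (Ac * P2h * v - K) by rewrite /d /K; nra.
  move=> /le_lt_trans; apply; rewrite pmulr_rlt0 //; lra.
have dcw : forall a b, {within `[a, b], continuous d}.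
  by move=> a b; apply: continuous_subspaceT.
have ivt : forall a b, a <= b -> d b < 0 -> 0 <= d a ->
    exists2 c, c \in `[a, b] & d c = 0.
  move=> a b ab db da; apply: IVT => //.
  rewrite ge_min le_max; apply/andP; split; apply/orP; [right|left]; lra.
pose Z : set R := fun t => 0 <= t /\ d t = 0.
have [z0 z0i dz0] : exists2 c, c \in `[0, T + 1] & d c = 0.
  apply: ivt; [lra | apply: dneg; lra | lra].
move: z0i; rewrite in_itv /= => /andP[z00 _].
have ubZ : forall t, Z t -> t <= T.
  move=> t [t0 dt]; rewrite leNgt; apply/negP => Tt.
  by have := dneg t (ltW Tt); rewrite dt ltxx.
have hasZ : has_sup Z.
  split; first by exists z0.
  by exists T => t; exact: ubZ.
set s := sup Z.
have z0s : z0 <= s by apply: sup_upper_bound.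
have z0p : 0 < z0.
  rewrite lt_neqAle z00 andbT; apply/eqP => z0e.
  by move: dz0; rewrite -z0e => dz; move: d0; rewrite dz ltxx.
have sT : s <= T by apply: ge_sup; [exists z0 | move=> t; exact: ubZ].
have ds : d s = 0.
  case: (ltgtP (d s) 0) => [dsn|dsp|//].
    have := cvgr_lt _ (dcont s) _ dsn.
    move=> /(_ _) /(@nbhs_ballP _ _ s) [del del0 Hb].
    have [z [zp zd] zs] := sup_adherent del0 hasZ.
    have zs' : z <= s by apply: sup_upper_bound.
    have : d z < 0.
      move: zs; rewrite -/s => zs; apply: Hb; rewrite -ball_normE /ball_ /= ger0_norm; lra.
    by rewrite zd ltxx.
  have [c ci dc] := ivt s T sT (dneg T (lexx T)) (ltW dsp).
  move: ci; rewrite in_itv /= => /andP[sc cT].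
  have cs : c <= s by apply: sup_upper_bound => //; split => //; lra.
  have ce : c = s by apply/eqP; rewrite eq_le cs sc.
  by move: dsp; rewrite -ce dc ltxx.
have after : forall t, s < t -> d t < 0.
  move=> t st; rewrite ltNge; apply/negP => dt0.
  case: (leP T t) => [Tt|tT].
    by have := dneg t Tt; rewrite ltNge dt0.
  have [c ci dc] := ivt t T (ltW tT) (dneg T (lexx T)) dt0.
  move: ci; rewrite in_itv /= => /andP[tc cT].
  have cs : c <= s by apply: sup_upper_bound => //; split => //; lra.
  lra.
have s0 : 0 < s by lra.
have DIc_eq : DI n E cc s = Qc s / (Ac + Qc s) by rewrite DI_eq.
exists s; split => //; split.
  apply/eqP; rewrite -subr_eq0 sgn ds mul0r //.
split; last first.
  move=> t st; rewrite -subr_lt0 sgn pmulr_llt0 //; exact: after.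
have [k1 k2] := key s (ltW s0).
set u := expR (- (2 * E 1%N * s)) in k1 k2 *.
set v := expR (- (k * s)) in k1 k2 *.
have u0 : 0 < u by exact: expR_gt0.
have v0 : 0 < v by exact: expR_gt0.
have hK : K <= Ac * P2h * v.
  have h : u * K <= u * (Ac * P2h * v).
    move: ds; rewrite /d => ds'; rewrite /K; nra.
  by move: h; rewrite ler_pM2l.
set X := (1 - Ah) / Ah - ph1 / Ah.
set Y := pc1 / Ac - ph1 / Ah.
have eX : X / Y = Ac * P2h / K.
  rewrite /X /Y Hnh /K.
  have hA : Ah != 0 by exact: lt0r_neq0.
  have hC : Ac != 0 by exact: lt0r_neq0.
  have hK' : pc1 * Ah - ph1 * Ac != 0 by exact: lt0r_neq0.
  field; by rewrite hK' hA hC.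
rewrite eX in epsb.
have vinv : v^-1 = expR (k * s) by rewrite /v expRN invrK.
have Xv : v^-1 <= Ac * P2h / K.
  by rewrite ler_pdivlMr // mulrC ler_pdivrMr.
have Xp : 0 < Ac * P2h / K by apply: lt_le_trans Xv; rewrite invr_gt0.
set al := E 1%N / (E 2%N - E 1%N).
have al0 : 0 <= al by rewrite /al divr_ge0 //; lra.
set W := powR (Ac * P2h / K) al.
have Wu : u^-1 <= W.
  rewrite /W /powR (gt_eqF Xp) /u expRN invrK ler_expR.
  have -> : 2 * E 1%N * s = al * (k * s).
    rewrite /al /k; field; rewrite subr_eq0; apply/eqP => h; lra.
  apply: ler_wpM2l => //.
  rewrite -(expRK (k * s)) ler_ln ?posrE ?expR_gt0 //.
  by rewrite -vinv.
have W0 : 0 < W by apply: lt_le_trans Wu; rewrite invr_gt0.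
have Qcp : 0 < Qc s by apply: lt_le_trans (Qs_lb n E cc s n1); rewrite mulr_gt0.
have hQW : pc1 <= W * Qc s.
  have : pc1 * u <= Qc s by exact: Qs_lb.
  have : 1 <= W * u by rewrite -ler_pdivrMr // mul1r.
  nra.
rewrite DIc_eq; apply: (lt_le_trans epsb).
rewrite invf_div.
rewrite -[Qc s / (Ac + Qc s)]invf_div.
have P1 : 0 < 1 + Ac / pc1 * W by rewrite ltr_pwDl // mulr_ge0 // ?divr_ge0 //; lra.
rewrite lef_pV2 ?posrE ?divr_gt0 //; last lra.
rewrite ler_pdivrMr //.
have -> : (1 + Ac / pc1 * W) * Qc s = Qc s + Ac * (W * Qc s / pc1).
  by field; exact: lt0r_neq0.
have : 1 <= W * Qc s / pc1 by rewrite ler_pdivlMr // mul1r.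
nra.
Qed.
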